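(* Let $n\ge2$, let $X\subset\mathbb{R}^n$ be finite with the Euclidean metric $d$, let $\epsilon>0$ and $A\subset X$. Then \[ B_\epsilon(A)\subset\bar A^{\mathfrak{m}}=\operatorname{int}(A)\cup(\partial A)^{\mathfrak{m}}. \]
   Context: $B_\epsilon(A)=\{p\in X: d(p,A)\le\epsilon\}$, where $d(p,A)=\inf_{a\in A}d(p,a)$. $\mathcal{Q}=\mathcal{Q}(\epsilon)$ is the collection of closed cubes $\{x\in\mathbb{R}^n: j_i\frac{\epsilon}{2\sqrt n}\le x_i\le (j_i+1)\frac{\epsilon}{2\sqrt n},\ i=1,\dots,n\}$, $j\in\mathbb{Z}^n$. For a cube $S\in\mathcal{Q}$ and integer $m\ge0$, $S^m=\{x\in\mathbb{R}^n:\max_i|x_i-s_i|\le m\frac{\epsilon}{2\sqrt n}\text{ for some }s\in S\}$. For $B\subset\mathbb{R}^n$, $\mathcal{I}(B)=\{S\in\mathcal{Q}: S\cap B\ne\emptyset\}$. A cube $S\in\mathcal{I}(A)$ is an interior cube of $A$ if $S^1\cap X\subset A$ and every cube $T\in\mathcal{Q}$ with $T\subset S^1$ lies in $\mathcal{I}(A)$; otherwise $S\in\mathcal{I}(A)$ is a boundary cube of $A$. $\operatorname{int}(A)$ is the union of the interior cubes, $\partial A$ the union of the boundary cubes, and $\bar A=\bigcup_{S\in\mathcal{I}(A)}S$. For $Y\subset\mathbb{R}^n$ and integer $N\ge0$, $Y^N=\bigcup_{S\in\mathcal{I}(Y)}S^N$. $\mathfrak{m}$ is the smallest integer with $\mathfrak{m}\ge2\sqrt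 n$. *)

(* Defs.v *)
From HB Require Import structures.
From mathcomp Require Import all_boot all_order all_algebra.
From mathcomp Require Import all_classical all_reals ereal.
Set Implicit Arguments. Unset Strict Implicit. Unset Printing Implicit Defensive.
Import Order.TTheory GRing.Theory Num.Theory.
Local Open Scope classical_set_scope.
Local Open Scope ring_scope.

Section Cubes.
Variables (R : realType) (n : nat).

Definition pt := 'I_n -> R.

Definition edist (x y : pt) : R := Num.sqrt (\sum_(i < n) (x i - y i) ^+ 2).

(* d(p,A) = inf_{a in A} d(p,a), as an extended real (+oo when A is empty) *)
Definition dist_set (p : pt) (A : set pt) : \bar R :=
  ereal_inf [set (edist p a)%:E | a in A].

Definition Bnbhd (X : set pt) (eps : R) (A : set pt) : set pt :=
  [set p | X p /\ (dist_set p A <= eps%:E)%E].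

Definition side (eps : R) : R := eps / (2 * Num.sqrt (n%:R)).

Definition cube (eps : R) (j : 'I_n -> int) : set pt :=
  [set x | forall i, (j i)%:~R * side eps <= x i <= (j i + 1)%:~R * side eps].

Definition cube_ext (eps : R) (m : nat) (j : 'I_n -> int) : set pt :=
  [set x | exists2 s, cube eps j s &
           forall i, `|x i - s i| <= m%:R * side eps].

Definition Icubes (eps : R) (B : set pt) : set ('I_n -> int) :=
  [set j | cube eps j `&` B !=set0].

Definition interior_cube (X : set pt) (eps : R) (A : set pt)
    (j : 'I_n -> int) : Prop :=
  Icubes eps A j /\ cube_ext eps 1 j `&` X `<=` A /\
  forall k, cube eps k `<=` cube_ext eps 1 j -> Icubes eps A k.

Definition boundary_cube (X : set pt) (eps : R) (A : set pt)
    (j : 'I_n -> int) : Prop :=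
  Icubes eps A j /\ ~ interior_cube X eps A j.

Definition cint (X : set pt) (eps : R) (A : set pt) : set pt :=
  \bigcup_(j in interior_cube X eps A) cube eps j.
Definition cbdry (X : set pt) (eps : R) (A : set pt) : set pt :=
  \bigcup_(j in boundary_cube X eps A) cube eps j.
Definition cclos (eps : R) (A : set pt) : set pt :=
  \bigcup_(j in Icubes eps A) cube eps j.

Definition cthick (eps : R) (Y : set pt) (N : nat) : set pt :=
  \bigcup_(j in Icubes eps Y) cube_ext eps N j.

(* frak m = smallest integer >= 2 sqrt n (nonnegative, so a nat) *)
Definition mfrak : nat := `|Num.ceil (2 * Num.sqrt (n%:R : R))|%N.

End Cubes.

(* Main.v *)
Require Import Defs.
From HB Require Import structures.
From mathcomp Require Import all_boot all_order all_algebra.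
From mathcomp Require Import all_classical all_reals ereal.
From mathcomp Require Import zify ring lra.
Import Order.TTheory GRing.Theory Num.Theory.
Set Implicit Arguments. Unset Strict Implicit. Unset Printing Implicit Defensive.
Local Open Scope classical_set_scope.
Local Open Scope ring_scope.

Section CubeLemmas.
Variables (R : realType) (n : nat) (eps : R).
Hypothesis hs : 0 < side n eps.
Local Notation s := (side n eps).
Ltac slra := let t := fresh "t" in let Ht := fresh "Ht" in pose proof (hs : (0:R) < side n eps); remember (side n eps) as t eqn:Ht in *; clear Ht; lra.

Lemma cubeP (j : 'I_n -> int) (x : pt R n) :
  cube eps j x <-> forall i, (j i)%:~R * s <= x i /\ x i <= (j i)%:~R * s + s.
Proof.
split => H i; have := H i; rewrite intrD mulrDl mul1r.
  by case/andP.
by case=> -> ->.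
Qed.

Lemma cube_extP m (j : 'I_n -> int) (x : pt R n) :
  cube_ext eps m j x <-> forall i,
    (j i)%:~R * s - m%:R * s <= x i /\ x i <= (j i)%:~R * s + s + m%:R * s.
Proof.
split.
  case=> y /cubeP hy hxy i; have [h1 h2] := hy i; have := hxy i.
  rewrite ler_norml => /andP[h3 h4]; slra.
move=> H.
exists (fun i => if x i < (j i)%:~R * s then (j i)%:~R * s
         else if (j i)%:~R * s + s < x i then (j i)%:~R * s + s else x i).
  apply/cubeP => i; have [h0 h0'] := H i.
  case: ifP => h1; first (split; slra).
  case: ifP => h2; first (split; slra).
  move: h1 h2 => /negbT; rewrite -leNgt => h1 /negbT; rewrite -leNgt; split; slra.
move=> i; have [h1 h2] := H i; have m0 : 0 <= m%:R * s :> R.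
  by apply: mulr_ge0 => //; exact: ltW.
rewrite ler_norml; case: ifP => h3.
  apply/andP; split; slra.
case: ifP => h4.
  apply/andP; split; slra.
apply/andP; split; slra.
Qed.

Lemma le_int_s (a b : int) : a%:~R * s <= b%:~R * s -> a <= b.
Proof. by rewrite ler_pM2r // ler_int. Qed.

Lemma cube_meet (j k : 'I_n -> int) x : cube eps j x -> cube eps k x ->
  forall i, j i - 1 <= k i /\ k i <= j i + 1.
Proof.
move=> /cubeP hj /cubeP hk i; have [a1 a2] := hj i; have [b1 b2] := hk i.
split.
  apply: le_int_s; rewrite intrD mulrDl; slra.
apply: le_int_s; rewrite intrD mulrDl; slra.
Qed.

Lemma cube_sub (m : nat) (j k : 'I_n -> int) :
  (forall i, j i - m%:Z <= k i /\ k i <= j i + m%:Z) ->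
  cube eps k `<=` cube_ext eps m j.
Proof.
move=> H x /cubeP hx; apply/cube_extP => i.
have [a1 a2] := hx i; have [b1 b2] := H i.
have c1 : ((j i - m%:Z)%:~R : R) * s <= (k i)%:~R * s by rewrite ler_pM2r // ler_int.
have c2 : ((k i)%:~R : R) * s <= (j i + m%:Z)%:~R * s by rewrite ler_pM2r // ler_int.
move: c1 c2; rewrite !intrD ?intrN -!pmulrn !mulrDl ?mulNr; slra.
Qed.

Lemma cube_nonempty (j : 'I_n -> int) : exists x, cube eps j x.
Proof.
exists (fun i => (j i)%:~R * s); apply/cubeP => i; split => //; slra.
Qed.

Lemma floor_cube (x : pt R n) : cube eps (fun i => Num.floor (x i / s)) x.
Proof.
apply/cubeP => i; split.
  by rewrite -ler_pdivlMr // floor_le.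
have : x i / s < (Num.floor (x i / s) + 1)%:~R.
  by rewrite -floor_lt_int ltrDl.
rewrite ltr_pdivrMr // intrD mulrDl mul1r; slra.
Qed.

Lemma ext_cube (m : nat) (T : 'I_n -> int) x : cube_ext eps m T x ->
  exists U, cube eps U x /\ forall i, T i - m%:Z <= U i /\ U i <= T i + m%:Z.
Proof.
move=> /cube_extP H.
pose f i := Num.floor (x i / s).
exists (fun i => if f i <= T i + m%:Z then f i else T i + m%:Z).
have key : forall i, T i - m%:Z <= f i /\ f i <= T i + m%:Z + 1.
  move=> i; have [h1 h2] := H i; split.
    rewrite /f floor_ge_int ler_pdivlMr // intrB -pmulrn mulrBl; slra.
  have := floor_le (x i / s); rewrite -/(f i) => h3.
  suff : ((f i)%:~R : R) * s <= (T i + m%:Z + 1)%:~R * s by rewrite ler_pM2r // ler_int.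
  rewrite ler_pdivlMr // in h3.
  rewrite !intrD -pmulrn !mulrDl mul1r; slra.
split; last first.
  move=> i; have := key i; case: ifP; move: (f i) (T i) => a b; lia.
apply/cubeP => i; have [k1 k2] := key i.
have := floor_cube x; move/cubeP/(_ i); rewrite -/(f i) => -[c1 c2].
case: ifP => h; first by split.
have e : f i = T i + m%:Z + 1 by move: h k1 k2; move: (f i) (T i) => a b; lia.
have [h1 h2] := H i.
move: c1; rewrite e !intrD -pmulrn !mulrDl mul1r => c1.
split; slra.
Qed.

End CubeLemmas.

Lemma walk n (P Q : ('I_n -> int) -> Prop) :
  (forall j k, P j -> (forall i, j i - 1%:Z <= k i /\ k i <= j i + 1%:Z) -> Q k) ->
  forall (m : nat) T U, P T -> (forall i, T i - m%:Z <= U i /\ U i <= T i + m%:Z) ->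
  P U \/ exists B, [/\ Q B, ~ P B & forall i, B i - m%:Z <= U i /\ U i <= B i + m%:Z].
Proof.
move=> HPQ; elim=> [|m IH] T U PT HU.
  left; have -> : U = T by apply: funext => i; have := HU i; lia.
  done.
pose T' := fun i => if T i < U i then T i + 1 else if U i < T i then T i - 1 else T i.
have adj : forall i, T i - 1%:Z <= T' i /\ T' i <= T i + 1%:Z.
  move=> i; rewrite /T'; case: ifP => h1; [|case: ifP => h2]; lia.
have HU' : forall i, T' i - m%:Z <= U i /\ U i <= T' i + m%:Z.
  move=> i; have := HU i; rewrite /T'; case: ifP => h1; [|case: ifP => h2]; lia.
have QT' := HPQ _ _ PT adj.
case: (pselect (P T')) => PT'.
  case: (IH T' U PT' HU') => [|[B [QB nPB HB]]]; first by left.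
  right; exists B; split => // i; have := HB i; lia.
right; exists T'; split => // i; have := HU' i; lia.
Qed.

Lemma finite_inf_le (R : realType) (T : Type) (A : set T) (f : T -> R) (e : R) :
  finite_set A -> (ereal_inf [set (f a)%:E | a in A] <= e%:E)%E ->
  exists2 a, A a & f a <= e.
Proof.
move=> finA hinf; apply: contrapT => hno.
have hlt : forall a, A a -> e < f a.
  move=> a Aa; rewrite ltNge; apply/negP => hle; apply: hno; by exists a.
have /finite_seqP [s hs] := finite_image f finA.
have : exists d, e < d /\ forall y, y \in s -> d <= y.
  have : forall y, y \in s -> e < y.
    move=> y ys; have : [set f x | x in A] y by rewrite hs.
    by case=> a Aa <-; exact: hlt.
  elim: s {hs} => [|y s IH] hy.
    by exists (e + 1); split => //; lra.
  have hy' : forall z, z \in s -> e < z by move=> z zs; apply: hy; rewrite in_cons zs orbT.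
  have [d [ed hd]] := IH hy'.
  exists (Num.min y d); split.
    by rewrite lt_min hy ?mem_head // ed.
  move=> z; rewrite in_cons => /orP[/eqP ->|zs]; first by rewrite ge_min lexx.
  by rewrite ge_min (hd z zs) orbT.
case=> d [ed hd].
have : (d%:E <= ereal_inf [set (f a)%:E | a in A])%E.
  apply/ereal_infP => _ [a Aa <-]; rewrite lee_fin; apply: hd.
  have : [set f x | x in A] (f a) by exists a.
  by rewrite hs.
move/le_trans/(_ hinf); rewrite lee_fin => de.
by move: de; rewrite leNgt ed.
Qed.

Lemma coord_le_edist (R : realType) n (p a : pt R n) i : `|p i - a i| <= edist p a.
Proof.
rewrite /edist -sqrtr_sqr; apply: ler_wsqrtr.
rewrite (bigD1 i) //= lerDl; apply: sumr_ge0 => k _; exact: sqr_ge0.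
Qed.

Lemma mfrak_ge (R : realType) n : 2 * Num.sqrt (n%:R : R) <= (mfrak R n)%:R.
Proof.
rewrite /mfrak [X in _ <= X]pmulrn gez0_abs; first exact: ceil_ge.
rewrite ceil_ge0; have := sqrtr_ge0 (n%:R : R); lra.
Qed.

Theorem corollary4p4 (R : realType) (n : nat) (X : set ('I_n -> R))
    (eps : R) (A : set ('I_n -> R)) :
  (2 <= n)%N -> finite_set X -> 0 < eps -> A `<=` X ->
  Bnbhd X eps A `<=` cthick eps (cclos eps A) (mfrak R n) /\
  cthick eps (cclos eps A) (mfrak R n)
    = cint X eps A `|` cthick eps (cbdry X eps A) (mfrak R n).
Proof.
move=> n2 finX e0 AX.
have sq0 : 0 < Num.sqrt (n%:R : R) by rewrite sqrtr_gt0 ltr0n (leq_trans _ n2).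
have hs : 0 < side n eps by rewrite /side divr_gt0 // mulr_gt0.
have Iclos : forall j, Icubes eps A j -> forall y, cube eps j y -> cclos eps A y.
  by move=> j hj y hy; exists j.
have m0 : 0 <= (mfrak R n)%:R * side n eps :> R by apply: mulr_ge0 => //; exact: ltW.
split.
  move=> p [Xp hd].
  have [a Aa hpa] := finite_inf_le (sub_finite_set AX finX) hd.
  pose U := fun i => Num.floor (a i / side n eps).
  have aU : cube eps U a := floor_cube hs a.
  exists U.
    exists a; split => //; apply: (Iclos U) => //; by exists a.
  exists a => // i; apply: le_trans (coord_le_edist p a i) _; apply: le_trans hpa _.
  have e2 : eps = (2 * Num.sqrt (n%:R : R)) * side n eps.
    by rewrite /side mulrC divfK // gt_eqF // mulr_gt0.
  rewrite {1}e2 ler_pM2r //; exact: mfrak_ge.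
apply/seteqP; split.
  move=> x [T [y [Ty [S IS Sy]]] xT].
  case: (pselect (interior_cube X eps A S)) => intS.
    have IT : Icubes eps A T.
      have [_ [_ h3]] := intS; apply: h3; apply: cube_sub => // i.
      have := cube_meet hs Sy Ty i; lia.
    case: (pselect (interior_cube X eps A T)) => intT.
      have [U [Ux HU]] := ext_cube hs xT.
      have HPQ : forall j k, interior_cube X eps A j ->
          (forall i, j i - 1%:Z <= k i /\ k i <= j i + 1%:Z) -> Icubes eps A k.
        by move=> j k [_ [_ h3]] hjk; apply: h3; apply: cube_sub.
      case: (walk HPQ intT HU) => [intU|[B [QB nPB HB]]].
        by left; exists U.
      right; exists B.
        have [z Bz] := cube_nonempty hs B.
        by exists z; split => //; exists B => //; split.
      exact: (cube_sub hs HB).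
    right; exists T => //.
    by exists y; split => //; exists T => //; split.
  right; exists T => //.
  by exists y; split => //; exists S => //; split.
move=> x [[S intS Sx]|[T [y [Ty [B bB By]]] xT]].
  exists S.
    exists x; split => //; apply: (Iclos S) => //; exact: intS.1.
  by exists x => // i; rewrite subrr normr0.
exists T => //.
exists y; split => //; apply: (Iclos B) => //; exact: bB.1.
Qed.
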